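(* Fix an integer $k\ge 0$, a link $i$ of a multi-link system, and $\#\in\{L,J\}$. Let $\mathfrak{V}_{L_i}^{(k+1)}=(V_0,\dots,V_{k+1})\in\mathbb{R}^{6(k+2)}$ be the comprehensive spatial velocity of link $i$ and $\mathfrak{V}_{L_i}^{(k)}=(V_0,\dots,V_k)$ its truncation, let $\mathfrak{h}_{\#_i}^{(k+1)}=(h_0,\dots,h_{k+1})\in\mathbb{R}^{6(k+2)}$ be the comprehensive (link or joint) momentum and $\mathfrak{h}_{\#_i}^{(k)}=(h_0,\dots,h_k)$ its truncation, and let the comprehensive force be $$\mathfrak{f}_{\#_i}^{(k)}=\mathfrak{U}\big([\mathfrak{V}_{L_i}^{(k)}\times^{*}_{6\cdot k}]\big)\,\mathfrak{h}_{\#_i}^{(k+1)}.$$ Suppose $\mathfrak{V}_{L_i}^{(k+1)}$ and $\mathfrak{h}_{\#_i}^{(k+1)}$ depend differentiably on a scalar parameter $\varepsilon$ and let $\delta$ denote $\frac{d}{d\varepsilon}$ at $\varepsilon=0$. Then $$\delta\mathfrak{f}_{\#_i}^{(k)}=\mathfrak{U}\big([\mathfrak{V}_{L_i}^{(k)}\times^{*}_{6\cdot k}]\big)\,\delta\mathfrak{h}_{\#_i}^{(k+1)}+\begin{bmatrix}[\mathfrak{h}_{\#_i}^{(k)}\,\hat{\times}^{*}_{6\cdot k}] & 0_{6(k+1)\times 6}\end{bmatrix}\delta\mathfrak{V}_{L_i}^{(k+1)}.$$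
   Context: Notation. For $u\in\mathbb{R}^3$, $[u\times]$ is the skew-symmetric cross-product matrix. For $u=(v_0,v_1)\in\mathbb{R}^6$, $[u\times_6]=\begin{bmatrix}[v_0\times]&0\\ [v_1\times]&[v_0\times]\end{bmatrix}$ and $[u\times^{*}_6]:=-[u\times_6]^{T}$. For a stacked vector $u=(u_0,\dots,u_k)\in\mathbb{R}^{6(k+1)}$, $[u\times^{*}_{6\cdot k}]$ is the block lower-triangular Toeplitz matrix with $(l,m)$ block $[u_{l-m}\times^{*}_6]$ for $l\ge m$ and zero blocks above the diagonal; $[x\,\hat{\times}^{*}_{6\cdot k}]$ is the matrix with $[x\,\hat{\times}^{*}_{6\cdot k}]\,y=[y\times^{*}_{6\cdot k}]\,x$ for all $y$. $N_{(1:k+1)}=\mathrm{diag}(1\cdot I_6,2\cdot I_6,\dots,(k+1)\cdot I_6)$. For $M\in\mathbb{R}^{6(k+1)\times 6(k+1)}$, $\mathfrak{U}(M):=\begin{bmatrix}M&0_{6(k+1)\times 6}\end{bmatrix}+\begin{bmatrix}0_{6(k+1)\times 6}&N_{(1:k+1)}\end{bmatrix}\in\mathbb{R}^{6(k+1)\times 6(k+2)}$. Comprehensive quantities are stacked vectors $(a,\tfrac{1}{1!}\dot a,\dots,\tfrac{1}{k!}a^{(k)})$ of a physical quantity and its scaled time derivatives; $\#=L$ refers to link quantities and $\#=J$ to quantities transmitted through the joint from the parent of link $i$ to link $i$, both expressed in the frame of link $i$. *)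

(* Defs.v *)
From HB Require Import structures.
From mathcomp Require Import all_boot all_order all_algebra.
From mathcomp Require Import all_classical all_reals all_analysis.
Set Implicit Arguments. Unset Strict Implicit. Unset Printing Implicit Defensive.
Import Order.TTheory GRing.Theory Num.Theory.
Local Open Scope ring_scope.

Section Defs.
Variable R : realType.

Definition cross3 (v : 'cV[R]_3) : 'M[R]_3 :=
  let v0 := v (@Ordinal 3 0 isT) 0 in let v1 := v (@Ordinal 3 1 isT) 0 in
  let v2 := v (@Ordinal 3 2 isT) 0 in
  \matrix_(i < 3, j < 3)
    nth 0 (nth [::] [:: [:: 0; - v2; v1];
                        [:: v2; 0; - v0];
                        [:: - v1; v0; 0]] i) j.

Definition cross6 (u : 'cV[R]_(3 + 3)) : 'M[R]_(3 + 3) :=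
  block_mx (cross3 (usubmx u)) 0 (cross3 (dsubmx u)) (cross3 (usubmx u)).

Definition crossstar6 (u : 'cV[R]_6) : 'M[R]_6 := - (cross6 u)^T.

Lemma bidx_proof n (a : 'I_(n * 6)) : (a %/ 6 < n)%N.
Proof. by rewrite ltn_divLR. Qed.
Definition bidx n (a : 'I_(n * 6)) : 'I_n := Ordinal (bidx_proof a).
Definition ridx n (a : 'I_(n * 6)) : 'I_6 := Ordinal (ltn_pmod a (isT : (0 < 6)%N)).

Lemma flat_proof n (l : 'I_n) (r : 'I_6) : (l * 6 + r < n * 6)%N.
Proof.
have := ltn_ord l; have := ltn_ord r; move: (nat_of_ord l) (nat_of_ord r) => x y.
move=> hy hx; apply: (@leq_trans (x * 6 + 6)); first by rewrite ltn_add2l.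
by rewrite -mulSnr leq_mul2r hx orbT.
Qed.

Definition blk n (u : 'cV[R]_(n * 6)) (l : 'I_n) : 'cV[R]_6 :=
  \col_(r < 6) u (Ordinal (flat_proof l r)) 0.

Definition crossstar6k k (u : 'cV[R]_(k.+1 * 6)) : 'M[R]_(k.+1 * 6) :=
  \matrix_(a, b)
    (if (bidx b <= bidx a)%N
     then crossstar6 (blk u (inord (bidx a - bidx b))) (ridx a) (ridx b)
     else 0).

(* [x ^x*_{6.k}] : the matrix with [x ^x*] y = [y x*] x for all y;
   its b-th column is [e_b x*] x *)
Definition hatcrossstar6k k (x : 'cV[R]_(k.+1 * 6)) : 'M[R]_(k.+1 * 6) :=
  \matrix_(a, b) (crossstar6k (delta_mx b 0) *m x) a 0.

Definition Nmat k : 'M[R]_(k.+1 * 6) :=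
  \matrix_(a, b) (if a == b then ((bidx a).+1)%:R else 0).

Definition Ucast k : ((k.+1 * 6 + 6) = k.+2 * 6)%N := esym (mulSnr k.+1 6).

Definition padR k (M : 'M[R]_(k.+1 * 6)) : 'M[R]_(k.+1 * 6, k.+2 * 6) :=
  castmx (erefl, Ucast k) (row_mx M (0 : 'M[R]_(k.+1 * 6, 6))).

Definition Umap k (M : 'M[R]_(k.+1 * 6)) : 'M[R]_(k.+1 * 6, k.+2 * 6) :=
  padR M + (row_mx (0 : 'M[R]_(k.+1 * 6, 6)) (Nmat k) : 'M[R]_(k.+1 * 6, k.+2 * 6)).

Definition trunc k (V : 'cV[R]_(k.+2 * 6)) : 'cV[R]_(k.+1 * 6) :=
  usubmx (castmx (esym (Ucast k), erefl 1%N) V).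

End Defs.

(* Main.v *)
Require Import Defs.
From HB Require Import structures.
From mathcomp Require Import all_boot all_order all_algebra.
From mathcomp Require Import all_classical all_reals all_analysis.
From mathcomp Require Import ring.
Import Order.TTheory GRing.Theory Num.Theory.
Local Open Scope ring_scope.

Section L.
Variable R : realType.

Lemma cross3_lin (a : R) u v : cross3 (a *: u + v) = a *: cross3 u + cross3 v.
Proof.
apply/matrixP => i j; rewrite !mxE.
case: i => [[|[|[|i]]] Hi] //; case: j => [[|[|[|j]]] Hj] //=; rewrite ?mxE;
  rewrite ?mulr0 ?addr0 //; try ring.
Qed.

Lemma cross6_lin (a : R) u v : cross6 (a *: u + v) = a *: cross6 u + cross6 v.
Proof.
by rewrite /cross6 !linearP /= !cross3_lin scale_block_mx add_block_mx scaler0 addr0.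
Qed.

Lemma crossstar6_lin (a : R) u v : crossstar6 (a *: u + v) = a *: crossstar6 u + crossstar6 v.
Proof.
by rewrite /crossstar6 cross6_lin linearP /= opprD scalerN.
Qed.

Lemma blk_lin n (a : R) (u v : 'cV[R]_(n * 6)) l : blk (a *: u + v) l = a *: blk u l + blk v l.
Proof. by apply/matrixP => i j; rewrite !mxE. Qed.

Lemma crossstar6k_lin k (a : R) u v :
  crossstar6k (k:=k) (a *: u + v) = a *: crossstar6k u + crossstar6k v.
Proof.
apply/matrixP => i j; rewrite !mxE; case: ifP => _; last by rewrite mulr0 addr0.
rewrite blk_lin.
move: (crossstar6_lin a (blk u (inord (bidx i - bidx j))) (blk v (inord (bidx i - bidx j)))).
by move=> /matrixP/(_ (ridx i) (ridx j)); rewrite !mxE.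
Qed.

Lemma lin_sum m n p (f : 'M[R]_(m, n) -> 'M[R]_p)
  (H : forall a u v, f (a *: u + v) = a *: f u + f v) (I : Type) (r : seq I) (P : pred I) c F :
  f (\sum_(i <- r | P i) c i *: F i) = \sum_(i <- r | P i) c i *: f (F i).
Proof.
have f0 : f 0 = 0.
  by move: (H (-1) 0 0); rewrite scaler0 addr0 scaleN1r addNr.
apply: (big_rec2 (fun x y => f x = y)) => // i x y _ <-; exact: H.
Qed.

Lemma CS_sum k (u : 'cV[R]_(k.+1 * 6)) :
  crossstar6k u = \sum_c u c 0 *: crossstar6k (delta_mx c 0).
Proof.
rewrite {1}[u]matrix_sum_delta.
under eq_bigr do rewrite big_ord1.
by rewrite (@lin_sum _ _ _ _ (@crossstar6k_lin k)).
Qed.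

Lemma hat_mul k (x y : 'cV[R]_(k.+1 * 6)) :
  hatcrossstar6k x *m y = crossstar6k y *m x.
Proof.
apply/matrixP => a j; rewrite (ord1 j) [in RHS]CS_sum mulmx_suml !mxE summxE.
apply: eq_bigr => b _; rewrite !mxE mulr_suml; apply: eq_bigr => c _; rewrite [in RHS]mxE; ring.
Qed.

Definition tidx k (c : 'I_(k.+1 * 6)) : 'I_(k.+2 * 6) := cast_ord (Ucast k) (lshift 6 c).

Lemma trunc_E k (w : 'cV[R]_(k.+2 * 6)) c j : trunc w c j = w (@tidx k c) j.
Proof. by rewrite /trunc mxE castmxE /=; congr (w _ _); apply: val_inj. Qed.

Lemma padR_mul k (C : 'M[R]_(k.+1 * 6)) (x : 'cV[R]_(k.+2 * 6)) :
  padR C *m x = C *m trunc x.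
Proof.
apply/matrixP => i j; rewrite !mxE.
rewrite (reindex (cast_ord (Ucast k))) /=; last first.
  by exists (cast_ord (esym (Ucast k))) => b _; rewrite ?cast_ordK ?cast_ordKV.
rewrite big_split_ord /= [X in _ + X]big1 ?addr0; last first.
  by move=> b _; rewrite castmxE /= cast_ordK cast_ord_id row_mxEr mxE mul0r.
apply: eq_bigr => b _.
by rewrite castmxE /= cast_ordK cast_ord_id row_mxEl trunc_E.
Qed.

Lemma Uentry k (v w : 'cV[R]_(k.+2 * 6)) i j :
 (Umap (crossstar6k (trunc v)) *m w) i j =
 \sum_c v (tidx k c) 0 * (\sum_b crossstar6k (delta_mx c 0) i b * w (tidx k b) j)
 + \sum_b (row_mx (0 : 'M[R]_(k.+1 * 6, 6)) (@Nmat R k)) i b * w b j.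
Proof.
rewrite /Umap mulmxDl padR_mul CS_sum mulmx_suml [in LHS]mxE summxE.
congr (_ + _); last by rewrite mxE.
apply: eq_bigr => c _; rewrite -scalemxAl [in LHS]mxE trunc_E [in LHS]mxE.
by congr (_ * _); apply: eq_bigr => b _; rewrite trunc_E.
Qed.

Lemma isd_sum (x : R) n (F : 'I_n -> R -> R) dF :
  (forall c, is_derive x 1 (F c) (dF c)) ->
  is_derive x 1 (fun e => \sum_c F c e) (\sum_c dF c).
Proof. by move=> H; have := is_derive_sum H; rewrite fct_sumE. Qed.

Lemma isd_mul (x : R) (f g : R -> R) df dg :
  is_derive x 1 f df -> is_derive x 1 g dg ->
  is_derive x 1 (fun e => f e * g e) (f x * dg + g x * df).
Proof. by move=> H1 H2; have := is_deriveM H1 H2. Qed.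

Lemma isd_add (x : R) (f g : R -> R) df dg :
  is_derive x 1 f df -> is_derive x 1 g dg ->
  is_derive x 1 (fun e => f e + g e) (df + dg).
Proof. by move=> H1 H2; have := is_deriveD H1 H2. Qed.

Lemma isd_cmul (x : R) (c : R) (f : R -> R) df :
  is_derive x 1 f df -> is_derive x 1 (fun e => c * f e) (c * df).
Proof. by move=> H1; have := is_deriveZ c H1. Qed.
End L.

Theorem lemma5 (R : realType) (k : nat)
  (V h : R -> 'cV[R]_(k.+2 * 6))
  (dV : forall e : R, derivable V e 1) (dh : forall e : R, derivable h e 1) :
  derive1 (fun e : R => Umap (crossstar6k (trunc (V e))) *m h e) 0 =
    Umap (crossstar6k (trunc (V 0))) *m (derive1 h 0)
    + padR (hatcrossstar6k (trunc (h 0))) *m (derive1 V 0).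
Proof.
have dVe p q : is_derive (0:R) 1 (fun e => V e p q) ('D_1 (fun e => V e p q) 0).
  exact/derivableP/((derivable_mxP V 0 1).1 (dV 0)).
have dhe p q : is_derive (0:R) 1 (fun e => h e p q) ('D_1 (fun e => h e p q) 0).
  exact/derivableP/((derivable_mxP h 0 1).1 (dh 0)).
have DV := derive_mx (dV 0).
have DH := derive_mx (dh 0).
set A0 := row_mx (0 : 'M[R]_(k.+1 * 6, 6)) (@Nmat R k).
have G i j : is_derive (0:R) 1
   (fun e => (Umap (crossstar6k (trunc (V e))) *m h e) i j)
   (\sum_c (V 0 (tidx k c) 0 * (\sum_b crossstar6k (delta_mx c 0) i b * 'D_1 (fun e => h e (tidx k b) j) 0)
            + (\sum_b crossstar6k (delta_mx c 0) i b * h 0 (tidx k b) j) * 'D_1 (fun e => V e (tidx k c) 0) 0)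
    + \sum_b A0 i b * 'D_1 (fun e => h e b j) 0).
  have -> : (fun e => (Umap (crossstar6k (trunc (V e))) *m h e) i j) =
     (fun e => \sum_c V e (tidx k c) 0 * (\sum_b crossstar6k (delta_mx c 0) i b * h e (tidx k b) j)
        + \sum_b A0 i b * h e b j).
    by apply/funext => e; rewrite Uentry.
  apply: isd_add; last by apply: isd_sum => b; apply: isd_cmul.
  apply: isd_sum => c; apply: isd_mul => //.
  by apply: isd_sum => b; apply: isd_cmul.
have Df : derivable (fun e : R => Umap (crossstar6k (trunc (V e))) *m h e) 0 1.
  by apply/derivable_mxP => i j; case: (G i j).
rewrite !derive1E (derive_mx Df) DV DH.
apply/matrixP => i j; rewrite mxE; have [_ ->] := G i j.
rewrite [RHS]mxE Uentry padR_mul hat_mul CS_sum mulmx_suml summxE.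
have EV p q : (\matrix_(i0, j0) 'D_1 (fun t => V t i0 j0) 0) p q = 'D_1 (fun t => V t p q) 0.
  by rewrite mxE.
have EH p q : (\matrix_(i0, j0) 'D_1 (fun t => h t i0 j0) 0) p q = 'D_1 (fun t => h t p q) 0.
  by rewrite mxE.
rewrite big_split /= -!addrA; congr (_ + _).
  by apply: eq_bigr => c _; rewrite (eq_bigr _ (fun b _ => congr1 (fun x => _ * x) (EH _ _))).
rewrite addrC; congr (_ + _).
  by apply: eq_bigr => b _; rewrite EH.
apply: eq_bigr => c _.
rewrite -scalemxAl [in RHS]mxE trunc_E EV mulrC [in RHS]mxE; congr (_ * _).
by apply: eq_bigr => b _; rewrite trunc_E.
Qed.
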